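(* Let $d$ and $\ell$ be positive integers and $q$ a prime power. Set $\operatorname{CGL}_d(q)^{(\ell)}=\{A_1\cdots A_\ell: A_i\in\operatorname{CGL}_d(q)\text{ for } i=1,\ldots,\ell\}\subseteq\operatorname{GL}_d(q)$. Then \[ \operatorname{CGL}_d(q)^{(\ell)}=\begin{cases}\operatorname{CGL}_d(q), & \ell=1,\\ \operatorname{GL}_d(q), & \ell\geq2\text{ and }(d,q)\notin\{(1,2),(1,3),(2,2)\},\\ \emptyset, & \ell\geq2\text{ and }(d,q)=(1,2),\\ \{(1)\}, & \ell\geq2\text{ and }(d,q)=(1,3),\\ \left\{\begin{pmatrix}1&0\\0&1\end{pmatrix},\begin{pmatrix}0&1\\1&1\end{pmatrix},\begin{pmatrix}1&1\\1&0\end{pmatrix}\right\}, & \ell\geq2\text{ and }(d,q)=(2,2).\end{cases} \]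
   Context: $\operatorname{GL}_d(q)$ is the group of invertible $(d\times d)$-matrices over $\mathbb{F}_q$, and $\operatorname{CGL}_d(q)$ is the set of matrices $A\in\operatorname{GL}_d(q)$ that do not have $-1$ as an eigenvalue (equivalently, $x\mapsto xA$ is a complete mapping of $\mathbb{F}_q^d$). *)

(* Defs.v *)
From HB Require Import structures.
From mathcomp Require Import all_boot all_order all_algebra all_fingroup all_field.
Set Implicit Arguments. Unset Strict Implicit. Unset Printing Implicit Defensive.
Import GRing.Theory.
Local Open Scope ring_scope.

Definition GLset (F : finFieldType) (d : nat) : {set 'M[F]_d} :=
  [set A : 'M[F]_d | A \in unitmx].

Definition CGL (F : finFieldType) (d : nat) : {set 'M[F]_d} :=
  [set A : 'M[F]_d | (A \in unitmx) && ~~ eigenvalue A (-1)].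

Definition CGLpow (F : finFieldType) (d l : nat) : {set 'M[F]_d} :=
  [set A : 'M[F]_d | [exists B : {ffun 'I_l -> 'M[F]_d},
     [forall i, B i \in CGL F d] && (A == \big[mulmx/1%:M]_(i < l) B i)]].

(* The matrix [[0,1],[1,1]]. *)
Definition M0111 (F : finFieldType) : 'M[F]_2 :=
  \matrix_(i < 2, j < 2) (if (i == 0 :> nat) && (j == 0 :> nat) then 0 else 1).
(* The matrix [[1,1],[1,0]]. *)
Definition M1110 (F : finFieldType) : 'M[F]_2 :=
  \matrix_(i < 2, j < 2) (if (i == 1 :> nat) && (j == 1 :> nat) then 0 else 1).

(* Main.v *)
Require Import Defs.
From HB Require Import structures.
From mathcomp Require Import all_boot all_order all_algebra all_fingroup all_field.
From mathcomp Require Import ring.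
Import GRing.Theory.
Local Open Scope ring_scope.

Definition ent (M : seq (seq nat)) i j := nth 0%N (nth [::] M i) j.
Definition mkmx n (f : nat -> nat -> nat) : seq (seq nat) :=
  mkseq (fun i => mkseq (f i) n) n.
Definition addc p n M N := mkmx n (fun i j => (ent M i j + ent N i j) %% p)%N.
Definition idc n := mkmx n (fun i j => nat_of_bool (i == j)).
Definition mulc p n M N :=
  mkmx n (fun i j => sumn (mkseq (fun k => ent M i k * ent N k j) n) %% p)%N.
Definition minorc n M j := mkmx n (fun k l => ent M k.+1 (bump j l)).
Fixpoint detl p n M := match n with
  | 0 => 1%N
  | m.+1 => (sumn (mkseq (fun j => (if odd j then p.-1 else 1) * ent M 0 j
                * detl p m (minorc m M j)) m.+1) %% p)%N end.
Fixpoint tuples {T} (m : nat) (alts : seq T) : seq (seq T) :=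
  match m with 0 => [:: [::]] | m'.+1 => [seq x :: s | x <- alts, s <- tuples m' alts] end.
Definition allmats p n := tuples n (tuples n (iota 0 p)).
Definition cglc p n B := (detl p n B != 0%N) && (detl p n (addc p n B (idc n)) != 0%N).
Fixpoint hasf {T} (a : pred T) (s : seq T) : bool :=
  match s with [::] => false | x :: s' => if a x then true else hasf a s' end.
Lemma hasfE {T} (a : pred T) s : hasf a s = has a s.
Proof. by elim: s => //= x s ->; case: (a x). Qed.
Definition Qcheckp p n cs (P : pred (seq (seq nat))) :=
  all (cglc p n) cs &&
  all (fun X => if P X then hasf (fun B => detl p n (addc p n B X) != 0%N) cs else true) (allmats p n).
Definition Qcheck p n cs := Qcheckp p n cs (fun _ => true).
Definition c0111 := [::[::0;1];[::1;1]]%N.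
Definition c1110 := [::[::1;1];[::1;0]]%N.
Definition cond2c (X : seq (seq nat)) := (ent X 0 0 != ent X 1 1) || ((ent X 0 1 == 0%N) && (ent X 1 0 == 0%N)).
Definition S22 := [:: idc 2; c0111; c1110].
Definition C22 := [:: c0111; c1110].
Lemma Q22c : Qcheckp 2 2 C22 cond2c. Proof. by vm_compute. Qed.
Lemma CGL12c : all (fun B => ~~ cglc 2 1 B) (allmats 2 1). Proof. by vm_compute. Qed.
Lemma CGL13c : all (fun B => cglc 3 1 B == (B == idc 1)) (allmats 3 1). Proof. by vm_compute. Qed.
Lemma CGL22c : all (fun B => cglc 2 2 B == (B \in C22)) (allmats 2 2). Proof. by vm_compute. Qed.
Lemma S22closed : all (fun x => all (fun y => mulc 2 2 x y \in S22) S22) S22. Proof. by vm_compute. Qed.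
Lemma S22solve : all (fun P => all (fun t => has (fun b1 => has (fun b2 =>
  mulc 2 2 b1 (mulc 2 2 b2 P) == t) C22) C22) S22) S22. Proof. by vm_compute. Qed.
Lemma C22inS : all (fun x => x \in S22) C22. Proof. by vm_compute. Qed.

Definition cs32 := [:: [::[::1;2];[::2;2]]; [::[::1;1];[::1;2]]; [::[::1;0];[::0;1]]; [::[::2;2];[::2;1]]]%N.
Definition cs23 := [:: [::[::0;0;1];[::0;1;1];[::1;1;1]];
[::[::0;1;0];[::1;0;1];[::0;1;1]];
[::[::1;1;1];[::1;0;0];[::1;0;1]];
[::[::1;0;1];[::0;0;1];[::1;1;0]];
[::[::1;1;0];[::1;1;1];[::0;1;0]];
[::[::0;1;1];[::1;1;0];[::1;0;0]];
[::[::1;1;0];[::0;1;1];[::1;1;1]];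
[::[::0;0;1];[::1;0;1];[::1;1;1]];
[::[::1;0;1];[::1;1;1];[::0;1;1]];
[::[::0;1;1];[::0;0;1];[::1;1;1]];
[::[::1;0;1];[::0;0;1];[::1;1;1]]]%N.
Definition cs33 := [::
[::[::2;1;2];[::1;2;2];[::2;2;2]];
[::[::2;2;0];[::2;1;2];[::1;2;2]];
[::[::1;2;1];[::2;0;2];[::0;2;2]];
[::[::2;2;2];[::2;2;0];[::0;1;2]];
[::[::1;1;2];[::0;0;2];[::1;0;0]];
[::[::2;1;2];[::0;0;1];[::1;1;2]];
[::[::0;2;1];[::1;1;2];[::1;0;1]];
[::[::0;0;2];[::0;2;2];[::2;2;2]]]%N.
Definition cs24 := [::
[::[::0;1;0;1];[::1;0;1;1];[::0;1;1;1];[::1;1;1;1]];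
[::[::1;0;1;0];[::1;0;0;0];[::1;1;0;1];[::1;0;1;1]];
[::[::1;1;0;0];[::1;0;0;1];[::0;0;0;1];[::0;0;1;1]];
[::[::0;0;0;1];[::0;1;1;1];[::1;1;0;0];[::1;0;0;1]];
[::[::1;0;1;1];[::1;0;1;0];[::0;1;0;0];[::1;0;0;0]];
[::[::1;1;0;0];[::0;1;0;1];[::1;1;1;1];[::0;0;1;0]];
[::[::0;0;1;1];[::0;0;1;0];[::1;1;0;1];[::0;1;1;0]];
[::[::0;0;1;0];[::1;1;1;1];[::0;1;1;0];[::1;1;0;0]];
[::[::1;0;0;1];[::0;0;1;1];[::1;1;1;0];[::0;1;0;1]];
[::[::0;1;1;1];[::1;0;0;0];[::1;1;0;0];[::0;1;0;1]];
[::[::0;1;0;0];[::1;1;1;1];[::1;0;1;0];[::1;0;0;0]];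
[::[::0;1;0;0];[::0;1;0;1];[::0;1;1;0];[::1;1;1;1]];
[::[::1;1;0;1];[::0;1;0;1];[::1;0;1;0];[::1;1;1;0]];
[::[::1;1;1;0];[::0;0;1;1];[::0;0;0;1];[::1;0;0;0]];
[::[::1;0;1;0];[::1;1;1;0];[::1;0;0;1];[::1;1;1;1]];
[::[::0;0;1;1];[::1;0;0;0];[::1;0;1;0];[::0;1;0;0]];
[::[::0;1;1;1];[::0;0;1;0];[::0;0;0;1];[::1;0;1;0]];
[::[::1;0;1;0];[::0;1;1;1];[::1;0;0;0];[::1;1;1;0]];
[::[::1;0;0;1];[::0;0;0;1];[::1;1;1;1];[::0;0;1;1]];
[::[::1;1;1;1];[::1;0;0;1];[::1;1;0;0];[::0;1;1;1]];
[::[::1;1;1;1];[::0;1;0;1];[::0;0;0;1];[::1;0;0;1]];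
[::[::0;1;0;1];[::0;0;1;0];[::0;0;1;1];[::1;1;1;1]];
[::[::0;1;0;1];[::0;0;0;1];[::1;1;1;0];[::0;1;1;0]]]%N.

Lemma Q32c : Qcheck 3 2 cs32. Proof. by vm_compute. Qed.
Lemma Q23c : Qcheck 2 3 cs23. Proof. by vm_compute. Qed.
Lemma Q33c : Qcheck 3 3 cs33. Proof. by vm_compute. Qed.
Lemma Q24c : Qcheck 2 4 cs24. Proof. by vm_compute. Qed.

Definition good {F : fieldType} {n} (X : 'M[F]_n) :=
  exists B : 'M[F]_n, [/\ B \in unitmx, B + 1%:M \in unitmx & B + X \in unitmx].

Definition mxF (F : finFieldType) n (M : seq (seq nat)) : 'M[F]_n :=
  \matrix_(i, j) (ent M i j)%:R.

Lemma ent_mkmx n f i j : (i < n)%N -> (j < n)%N -> ent (mkmx n f) i j = f i j.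
Proof. by move=> hi hj; rewrite /ent /mkmx nth_mkseq // nth_mkseq. Qed.

Lemma mxF_add (F : finFieldType) p (hp : p \in [pchar F]) n M N :
  mxF F n (addc p n M N) = mxF F n M + mxF F n N.
Proof. by apply/matrixP=> i j; rewrite !mxE ent_mkmx // GRing.natr_mod_pchar // natrD. Qed.

Lemma mxF_id (F : finFieldType) n : mxF F n (idc n) = 1%:M.
Proof. by apply/matrixP=> i j; rewrite !mxE ent_mkmx. Qed.

Lemma sumn_mkseq n (f : nat -> nat) : sumn (mkseq f n) = (\sum_(i < n) f i)%N.
Proof.
rewrite sumnE /mkseq big_map.
have -> : iota 0 n = index_iota 0 n by rewrite /index_iota subn0.
by rewrite big_mkord.
Qed.

Lemma mxF_mul (F : finFieldType) p (hp : p \in [pchar F]) n M N :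
  mxF F n (mulc p n M N) = mxF F n M *m mxF F n N.
Proof.
apply/matrixP=> i j; rewrite !mxE ent_mkmx // GRing.natr_mod_pchar //. rewrite sumn_mkseq natr_sum.
by apply: eq_bigr => k _; rewrite !mxE natrM.
Qed.

Lemma detlS p m M : detl p m.+1 M = (sumn (mkseq (fun j => (if odd j then p.-1 else 1) * ent M 0 j
                * detl p m (minorc m M j)) m.+1) %% p)%N.
Proof. by []. Qed.

Lemma detF (F : finFieldType) p (hp : p \in [pchar F]) n M :
  \det (mxF F n M) = (detl p n M)%:R.
Proof.
have p0 : (0 < p)%N by apply: prime_gt0; case/andP: hp.
have hm1 : (p.-1)%:R = -1 :> F.
  by apply/eqP; rewrite -subr_eq0 opprK natr1 prednK // (pcharf0 hp).
elim: n M => [|m IH] M; first by rewrite det_mx00.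
rewrite (expand_det_row _ ord0) detlS GRing.natr_mod_pchar // sumn_mkseq natr_sum.
apply: eq_bigr => j _.
rewrite /cofactor !mxE.
have -> : row' ord0 (col' j (mxF F m.+1 M)) = mxF F m (minorc m M j).
  by apply/matrixP=> k l; rewrite !mxE ent_mkmx // lift0.
rewrite IH !natrM add0n -signr_odd; case: (odd j); rewrite ?hm1 /=; ring.
Qed.

Lemma detl_lt p n M : (1 < p)%N -> (detl p n M < p)%N.
Proof. by case: n => [|n] /= hp //; rewrite ltn_pmod // ltnW. Qed.

Lemma unit_mxF (F : finFieldType) p (hp : p \in [pchar F]) n M :
  (mxF F n M \in unitmx) = (detl p n M != 0%N).
Proof.
have p1 : (1 < p)%N by apply: prime_gt1; case/andP: hp.
rewrite unitmxE unitfE (@detF _ _ hp) -(dvdn_pcharf hp) /dvdn modn_small //.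
exact: detl_lt.
Qed.

Arguments unit_mxF {F p} hp {n} M.
Arguments mxF_add {F p} hp {n} M N.
Arguments mxF_mul {F p} hp {n} M N.
Arguments detF {F p} hp {n} M.

Lemma pchar_card {F : finFieldType} {p} : prime p -> #|F| = p -> p \in [pchar F].
Proof. by move=> pp hF; apply: (card_finPcharP (n := 1)) => //; rewrite expn1. Qed.

Lemma natr_inj_lt {F : finFieldType} {p} (hp : p \in [pchar F]) i j :
  (i < p)%N -> (j < p)%N -> i%:R = j%:R :> F -> i = j.
Proof.
have key : forall a b, (a < p)%N -> (b < p)%N -> (a <= b)%N -> a%:R = b%:R :> F -> a = b.
  move=> a b ha hb hab e.
  have : (b - a)%:R == 0 :> F by rewrite natrB // e subrr.
  rewrite -(dvdn_pcharf hp) /dvdn modn_small; last by apply: leq_ltn_trans hb; apply: leq_subr.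
  by rewrite subn_eq0 => h; apply/eqP; rewrite eqn_leq hab h.
move=> hi hj e; case: (leqP i j) => h; first exact: key.
by apply/esym/key => //; apply: ltnW.
Qed.

Definition cF {F : finFieldType} p (x : F) : nat := find (fun i => i%:R == x) (iota 0 p).

Lemma cF_spec {F : finFieldType} {p} (hp : p \in [pchar F]) (hF : #|F| = p) (x : F) :
  (cF p x < p)%N /\ (cF p x)%:R = x.
Proof.
pose f := fun i : 'I_p => (i : nat)%:R : F.
have finj : injective f.
  by move=> i j /(natr_inj_lt hp _ _ (ltn_ord i) (ltn_ord j)) e; apply: val_inj.
have : x \in codom f by apply: inj_card_onto => //; rewrite card_ord hF.
case/codomP=> i ->.
have hh : has (fun k => k%:R == f i) (iota 0 p).
  by apply/hasP; exists (i : nat); rewrite ?mem_iota ?add0n ?ltn_ord.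
have hlt : (cF p (f i) < p)%N by rewrite /cF -{2}(size_iota 0 p) -has_find.
split=> //; move: (nth_find 0%N hh); rewrite nth_iota // add0n => /eqP.
by [].
Qed.

Definition codeX {F : finFieldType} p {n} (X : 'M[F]_n) : seq (seq nat) :=
  [seq [seq cF p (X i j) | j <- enum 'I_n] | i <- enum 'I_n].

Lemma ent_codeX (F : finFieldType) p n (X : 'M[F]_n) (i j : 'I_n) :
  ent (codeX p X) i j = cF p (X i j).
Proof.
rewrite /ent /codeX (nth_map i) ?size_enum_ord // nth_ord_enum.
by rewrite (nth_map j) ?size_enum_ord // nth_ord_enum.
Qed.

Lemma mxF_codeX {F : finFieldType} {p} (hp : p \in [pchar F]) (hF : #|F| = p) {n} (X : 'M[F]_n) :
  mxF F n (codeX p X) = X.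
Proof. by apply/matrixP=> i j; rewrite mxE ent_codeX; case: (cF_spec hp hF (X i j)). Qed.

Lemma mem_tuples (T : eqType) m (alts : seq T) s :
  size s = m -> all (mem alts) s -> s \in tuples m alts.
Proof.
elim: s m => [|x s IH] [|m] //=.
by move=> [hs] /andP[hx hall]; apply: allpairs_f => //; apply: IH.
Qed.

Lemma codeX_mem {F : finFieldType} {p} (hp : p \in [pchar F]) (hF : #|F| = p) {n} (X : 'M[F]_n) :
  codeX p X \in allmats p n.
Proof.
apply: mem_tuples; first by rewrite size_map size_enum_ord.
apply/allP=> r /mapP[i _ ->]; apply: mem_tuples; first by rewrite size_map size_enum_ord.
apply/allP=> y /mapP[j _ ->]; rewrite /= mem_iota add0n.
by case: (cF_spec hp hF (X i j)).
Qed.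

Lemma BFgoodp (F : finFieldType) p n cs P : prime p -> #|F| = p -> Qcheckp p n cs P ->
  forall X : 'M[F]_n, P (codeX p X) -> good X.
Proof.
move=> pp hF /andP[/allP hcs /allP hall] X hPX.
have hp := pchar_card pp hF.
have := hall _ (codeX_mem hp hF X); rewrite hPX hasfE => /hasP[B0 hB0 hdet].
case/andP: (hcs _ hB0) => h1 h2.
exists (mxF F n B0); split.
- by rewrite (unit_mxF hp).
- by rewrite -(mxF_id F n) -(mxF_add hp) (unit_mxF hp).
- by rewrite -{1}(mxF_codeX hp hF X) -(mxF_add hp) (unit_mxF hp).
Qed.

Lemma BFgood (F : finFieldType) p n cs : prime p -> #|F| = p -> Qcheck p n cs ->
  forall X : 'M[F]_n, good X.
Proof. by move=> pp hF hc X; exact: (@BFgoodp F p n cs (fun _ => true) pp hF hc X isT). Qed.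

Definition Qn (F : fieldType) n := forall X : 'M[F]_n, good X.

Lemma good_block (F : fieldType) m n (X11 : 'M[F]_m) X12 X21 (X22 : 'M[F]_n) :
  good X11 -> good X22 -> good (block_mx X11 X12 X21 X22).
Proof.
case=> B1 [u1 v1 w1] [B2 [u2 v2 w2]].
exists (block_mx B1 0 (- X21) B2); split.
- by rewrite unitmxE det_lblock unitrM -!unitmxE u1 u2.
- by rewrite (scalar_mx_block m n) add_block_mx !addr0 unitmxE det_lblock unitrM -!unitmxE v1 v2.
- by rewrite add_block_mx add0r addNr unitmxE det_ublock unitrM -!unitmxE w1 w2.
Qed.

Lemma QnD (F : fieldType) m n : Qn F m -> Qn F n -> Qn F (m + n).
Proof. by move=> hm hn X; rewrite -(submxK X); apply: good_block. Qed.

Lemma good_conj (F : fieldType) n (P Q X : 'M[F]_n) :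
  P *m Q = 1%:M -> good (P *m X *m Q) -> good X.
Proof.
move=> PQ [B [u v w]].
have QP := mulmx1C PQ.
case: (mulmx1_unit PQ) => uP uQ.
exists (Q *m B *m P); split.
- by rewrite !unitmx_mul uQ u uP.
- have -> : Q *m B *m P + 1%:M = Q *m (B + 1%:M) *m P.
    by rewrite mulmxDr mulmxDl mulmx1 QP.
  by rewrite !unitmx_mul uQ v uP.
- have -> : Q *m B *m P + X = Q *m (B + P *m X *m Q) *m P.
    rewrite mulmxDr mulmxDl; congr (_ + _).
    by rewrite !mulmxA QP mul1mx -mulmxA QP mulmx1.
  by rewrite !unitmx_mul uQ w uP.
Qed.

Lemma good_tr (F : fieldType) n (X : 'M[F]_n) : good X^T -> good X.
Proof.
case=> B [u v w]; exists B^T; split.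
- by rewrite unitmx_tr.
- by rewrite -trmx1 -raddfD /= unitmx_tr.
- by rewrite -{1}(trmxK X) -raddfD /= unitmx_tr.
Qed.

Definition i0 : 'I_2 := @Ordinal 2 0 isT.
Definition i1 : 'I_2 := @Ordinal 2 1 isT.
Definition cond2 {F : fieldType} (Y : 'M[F]_2) :=
  (Y i0 i0 != Y i1 i1) || ((Y i0 i1 == 0) && (Y i1 i0 == 0)).

Lemma L2core {F : fieldType} {n} (H2 : forall Y : 'M[F]_2, cond2 Y -> good Y) (hQ : Qn F n)
  (X11 : 'M[F]_2) X12 X21 (X22 : 'M[F]_n) :
  X11 i0 i0 = X11 i1 i1 -> X12 != 0 -> good (block_mx X11 X12 X21 X22).
Proof.
move=> hdiag hX12.
have [i [k hik]] : exists i k, X12 i k != 0.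
  case: (pickP (fun ik : 'I_2 * 'I_n => X12 ik.1 ik.2 != 0)) => [[i k] /= hik | h0].
    by exists i, k.
  case/eqP: hX12; apply/matrixP=> i k; rewrite mxE.
  by move: (h0 (i, k)) => /= /negbFE/eqP.
case: (hQ X22) => B2 [u2 v2 w2].
set S' := B2 + X22.
set u : 'rV[F]_2 := delta_mx 0 i.
set W : 'M[F]_(n, 2) := delta_mx k 0 *m u.
set Y := X11 - X12 *m W.
have hY : forall j j', Y j j' = X11 j j' - X12 j k * (i == j')%:R.
  move=> j j'; rewrite /Y /W mulmxA -colE !mxE big_ord1 !mxE /=.
  by rewrite eq_sym.
have cY : cond2 Y.
  apply/orP; left; rewrite !hY -hdiag.
  have : i = i0 \/ i = i1.
    have := ltn_ord i; case hi: (nat_of_ord i) => [|[|//]] _; [left|right]; apply: val_inj; by rewrite /= hi.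
  case=> ei; move: hik; rewrite ei => hik; rewrite /= ?mulr1 ?mulr0 ?subr0.
    by rewrite -subr_eq0 addrAC subrr add0r oppr_eq0.
  by rewrite eq_sym -subr_eq0 addrAC subrr add0r oppr_eq0.
case: (H2 _ cY) => B1 [u1 v1 w1].
exists (block_mx B1 0 (S' *m W - X21) B2); split.
- by rewrite unitmxE det_lblock unitrM -!unitmxE u1 u2.
- by rewrite (scalar_mx_block 2 n) add_block_mx !addr0 unitmxE det_lblock unitrM -!unitmxE v1 v2.
- rewrite add_block_mx add0r subrK.
  have -> : block_mx (B1 + X11) X12 (S' *m W) (B2 + X22) =
            block_mx (B1 + Y) X12 0 S' *m block_mx 1%:M 0 W 1%:M.
    rewrite mulmx_block !mulmx0 !mulmx1 ?mul0mx ?addr0 ?add0r.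
    by rewrite /Y addrA subrK.
  rewrite unitmx_mul unitmxE det_ublock unitrM -!unitmxE w1 w2 /=.
  by rewrite unitmxE det_lblock !det1 mulr1 unitr1.
Qed.

Lemma L2 (F : fieldType) n (H2 : forall Y : 'M[F]_2, cond2 Y -> good Y) :
  Qn F n.+1 -> Qn F (2 + n.+1).
Proof.
move=> hQ X; rewrite -(submxK X).
set X11 := ulsubmx X; set X12 := ursubmx X; set X21 := dlsubmx X; set X22 := drsubmx X.
case c11: (cond2 X11); first by apply: good_block; [exact: H2 | exact: hQ].
have hd : X11 i0 i0 = X11 i1 i1.
  by move/negbT: c11; rewrite /cond2 negb_or negbK => /andP[/eqP -> _].
case: (eqVneq X12 0) => h12; last exact: (L2core H2 hQ).
case: (eqVneq X21 0) => h21; last first.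
  apply: good_tr; rewrite tr_block_mx; apply: (L2core H2 hQ).
  - by move: hd; rewrite !mxE => ->.
  - by apply: contra h21 => /eqP h; apply/eqP; rewrite -(trmxK X21) h; apply/matrixP => a b; rewrite !mxE.
rewrite h12 h21.
pose s : {perm 'I_(2 + n.+1)} := tperm (lshift n.+1 i1) (rshift 2 (ord0 : 'I_n.+1)).
apply: (@good_conj _ _ (perm_mx s) (perm_mx s^-1)).
  by rewrite -perm_mxM mulgV perm_mx1.
rewrite -mulmxA -col_permE -row_permE.
set Z := row_perm s _.
rewrite -(submxK Z); apply: good_block; last exact: hQ.
apply: H2; rewrite /cond2; apply/orP; right.
have e0 : s (lshift n.+1 i0) = lshift n.+1 i0 by rewrite tpermD.
have e1 : s (lshift n.+1 i1) = rshift 2 (ord0 : 'I_n.+1) by rewrite tpermL.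
have hZ : forall i j, ulsubmx Z i j = block_mx X11 0 0 X22 (s (lshift n.+1 i)) (s (lshift n.+1 j)).
  by move=> i j; rewrite [LHS]mxE [LHS]mxE [LHS]mxE [LHS]mxE.
rewrite !hZ e0 e1 block_mxEur block_mxEdl !mxE eqxx.
done.
Qed.

Lemma Q1big (F : finFieldType) : (4 <= #|F|)%N -> Qn F 1.
Proof.
move=> h4 X.
set x := X 0 0.
have [b hb] : exists b : F, b \notin [:: 0; -1; -x].
  case: (pickP [pred b : F | b \notin [:: 0; -1; -x]]) => [b hb | h]; first by exists b.
  exfalso; have : (#|F| <= 3)%N.
    apply: leq_trans (card_size [:: 0; -1; -x]); apply: subset_leq_card.
    by apply/subsetP => b _; move: (h b) => /= /negbFE.
  by rewrite leqNgt (leq_trans _ h4).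
move: hb; rewrite !inE !negb_or => /andP[hb0 /andP[hb1 hbx]].
exists b%:M; split.
- by rewrite unitmxE det_scalar1 unitfE.
- by rewrite -raddfD /= unitmxE det_scalar1 unitfE addr_eq0.
- by rewrite [X]mx11_scalar -raddfD /= unitmxE det_scalar1 unitfE addr_eq0.
Qed.

Lemma CGLE (F : finFieldType) d (B : 'M[F]_d) :
  (B \in CGL F d) = (B \in unitmx) && (B + 1%:M \in unitmx).
Proof.
rewrite inE /eigenvalue /eigenspace negbK.
have -> : B - (-1)%:M = B + 1%:M.
  by apply/matrixP=> i j; rewrite !mxE; case: (i == j); rewrite /= ?mulr1n ?mulr0n ?opprK ?oppr0.
by rewrite kermx_eq0 row_free_unit.
Qed.

Lemma cF0 (F : finFieldType) p : (0 < p)%N -> cF p (0 : F) = 0%N.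
Proof. by case: p => //= p _; rewrite /cF /= eqxx. Qed.

Lemma cond2_code (F : finFieldType) (hF : #|F| = 2) (Y : 'M[F]_2) :
  cond2 Y -> cond2c (codeX 2 Y).
Proof.
have hp := pchar_card (isT : prime 2) hF.
have cinj : forall a b : F, cF 2 a = cF 2 b -> a = b.
  move=> a b e; case: (cF_spec hp hF a) => _ <-; case: (cF_spec hp hF b) => _ <-.
  by rewrite e.
have E := @ent_codeX F 2%N 2%N Y.
rewrite /cond2 /cond2c (E i0 i0) (E i1 i1) (E i0 i1) (E i1 i0).
move/orP => [h | /andP[/eqP h1 /eqP h2]]; apply/orP; [left | right].
  by apply: contra h => /eqP /cinj ->.
by rewrite h1 h2 cF0.
Qed.

Lemma Qall (F : finFieldType) d : (0 < d)%N ->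
  ~ ((d, #|F|) = (1, 2)%N \/ (d, #|F|) = (1, 3)%N \/ (d, #|F|) = (2, 2)%N) -> Qn F d.
Proof.
move=> hd hex.
have q2 : (1 < #|F|)%N.
  by apply/card_gt1P; exists 0, 1; split=> //; rewrite eq_sym oner_neq0.
have : #|F| = 2%N \/ #|F| = 3%N \/ (4 <= #|F|)%N.
  case: #|F| q2 => [|[|[|[|q]]]] //= _; by [left | right; left | right; right].
case=> [hF | [hF | h4]].
- have H2 : forall Y : 'M[F]_2, cond2 Y -> good Y.
    by move=> Y hY; apply: (@BFgoodp F 2 2 C22 cond2c isT hF Q22c); apply: cond2_code.
  have key : forall k, Qn F k.+3 /\ Qn F k.+4.
    elim=> [|k [IH1 IH2]].
      by split; [exact: (@BFgood F 2 3 cs23 isT hF Q23c) | exact: (@BFgood F 2 4 cs24 isT hF Q24c)].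
    by split=> //; exact: (@L2 F k.+2 H2 IH1).
  have d3 : (3 <= d)%N.
    case: d hd hex => [|[|[|d]]] //= _; rewrite hF => hex; exfalso; apply: hex.
      by left.
    by right; right.
  by rewrite -(subnK d3) addn3; case: (key (d - 3)%N).
- have key : forall k, Qn F k.+2 /\ Qn F k.+3.
    elim=> [|k [IH1 IH2]].
      by split; [exact: (@BFgood F 3 2 cs32 isT hF Q32c) | exact: (@BFgood F 3 3 cs33 isT hF Q33c)].
    split=> //; apply: (@QnD F 2 k.+2) => //; exact: (@BFgood F 3 2 cs32 isT hF Q32c).
  have d2 : (2 <= d)%N.
    case: d hd hex => [|[|d]] //= _; rewrite hF => hex; exfalso; apply: hex.
    by right; left.
  by rewrite -(subnK d2) addn2; case: (key (d - 2)%N).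
- have key : forall k, Qn F k.+1.
    elim=> [|k IH]; first exact: Q1big.
    exact: (@QnD F 1 k.+1 (@Q1big F h4) IH).
  by rewrite -(prednK hd).
Qed.

Lemma CGLpowP (F : finFieldType) d l (A : 'M[F]_d) :
  reflect (exists B : {ffun 'I_l -> 'M[F]_d},
            (forall i, B i \in CGL F d) /\ A = \big[mulmx/1%:M]_(i < l) B i)
          (A \in CGLpow F d l).
Proof.
rewrite inE; apply: (iffP existsP) => [[B /andP[/forallP h /eqP e]] | [B [h e]]].
  by exists B.
by exists B; rewrite e eqxx andbT; apply/forallP.
Qed.

Definition fac {F : fieldType} {d} k (b1 b2 C : 'M[F]_d) : {ffun 'I_k.+2 -> 'M[F]_d} :=
  [ffun i : 'I_k.+2 => if (i : nat) == 0%N then b1 else if (i : nat) == 1%N then b2 else C].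

Lemma prod_fac (F : fieldType) d k (b1 b2 C : 'M[F]_d) :
  \big[mulmx/1%:M]_(i < k.+2) fac k b1 b2 C i = b1 *m (b2 *m \big[mulmx/1%:M]_(i < k) C).
Proof.
rewrite !big_ord_recl !ffunE /=; congr (_ *m (_ *m _)).
by apply: eq_bigr => i _; rewrite ffunE.
Qed.

Lemma fac_CGL (F : finFieldType) d k (b1 b2 C : 'M[F]_d) :
  b1 \in CGL F d -> b2 \in CGL F d -> C \in CGL F d -> forall i, fac k b1 b2 C i \in CGL F d.
Proof. by move=> h1 h2 h3 i; rewrite ffunE; case: ifP => _ //; case: ifP. Qed.

Lemma prod_unit (F : finFieldType) d I (r : seq I) (B : I -> 'M[F]_d) :
  (forall i, B i \in unitmx) -> \big[mulmx/1%:M]_(i <- r) B i \in unitmx.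
Proof.
move=> h; apply: (big_ind (fun M : 'M[F]_d => M \in unitmx)) => //.
- exact: unitmx1.
- by move=> x y hx hy; rewrite unitmx_mul hx hy.
Qed.

Lemma pow_GL (F : finFieldType) d l : (2 <= l)%N -> Qn F d -> CGLpow F d l = GLset F d.
Proof.
move=> hl hQ; apply/setP => A; rewrite [RHS]inE; apply/CGLpowP/idP.
  move=> [B [h ->]]; apply: prod_unit => i.
  by move: (h i); rewrite CGLE => /andP[].
move=> hA.
case: (hQ 0) => C [uC vC _].
have CC : C \in CGL F d by rewrite CGLE uC vC.
have -> : l = (l - 2).+2 by rewrite -addn2 subnK.
set k := (l - 2)%N.
set Ck := \big[mulmx/1%:M]_(i < k) C.
have uCk : Ck \in unitmx by apply: prod_unit.
set A' := A *m invmx Ck.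
have uA' : A' \in unitmx by rewrite unitmx_mul hA unitmx_inv.
case: (hQ A') => B1 [u1 v1 w1].
set b2 := invmx B1 *m A'.
have C1 : B1 \in CGL F d by rewrite CGLE u1 v1.
have C2 : b2 \in CGL F d.
  rewrite CGLE unitmx_mul unitmx_inv u1 uA' /=.
  have -> : b2 + 1%:M = invmx B1 *m (B1 + A').
    by rewrite mulmxDr mulVmx // addrC.
  by rewrite unitmx_mul unitmx_inv u1 w1.
exists (fac k B1 b2 C); split; first exact: fac_CGL.
rewrite prod_fac /b2 -mulmxA mulKVmx // /A' mulmxKV //.
Qed.

Lemma cglc_mxF {F : finFieldType} {p} (hp : p \in [pchar F]) n M :
  (mxF F n M \in CGL F n) = cglc p n M.
Proof. by rewrite CGLE -(mxF_id F n) -(mxF_add hp) !(unit_mxF hp). Qed.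

Lemma pow1 (F : finFieldType) d : CGLpow F d 1 = CGL F d.
Proof.
apply/setP => A; apply/CGLpowP/idP.
  by move=> [B [h ->]]; rewrite big_ord_recl big_ord0 mulmx1.
move=> hA; exists [ffun => A]; split; first by move=> i; rewrite ffunE.
by rewrite big_ord_recl big_ord0 mulmx1 ffunE.
Qed.

Lemma case12 (F : finFieldType) l : #|F| = 2%N -> (0 < l)%N -> CGLpow F 1 l = set0.
Proof.
move=> hF hl; have hp := pchar_card (isT : prime 2) hF.
apply/setP => A; rewrite in_set0; apply/negP => /CGLpowP [B [h _]].
move: (h (Ordinal hl)); rewrite -(mxF_codeX hp hF (B _)) (cglc_mxF hp).
by move/negP: (allP CGL12c _ (codeX_mem hp hF (B (Ordinal hl)))).
Qed.

Lemma CGL13 (F : finFieldType) : #|F| = 3%N -> forall B : 'M[F]_1, (B \in CGL F 1) = (B == 1%:M).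
Proof.
move=> hF B; have hp := pchar_card (isT : prime 3) hF.
apply/idP/eqP => [|->]; last by rewrite -(mxF_id F 1) (cglc_mxF hp).
rewrite -{1}(mxF_codeX hp hF B) (cglc_mxF hp).
rewrite (eqP (allP CGL13c _ (codeX_mem hp hF B))) => /eqP e.
by rewrite -(mxF_codeX hp hF B) e mxF_id.
Qed.

Lemma big_one (F : fieldType) d I (r : seq I) (B : I -> 'M[F]_d) :
  (forall i, B i = 1%:M) -> \big[mulmx/1%:M]_(i <- r) B i = 1%:M.
Proof.
move=> h; apply: (big_ind (fun M : 'M[F]_d => M = 1%:M)) => //.
by move=> x y -> ->; rewrite mulmx1.
Qed.

Lemma case13 (F : finFieldType) l : #|F| = 3%N -> CGLpow F 1 l = [set 1%:M].
Proof.
move=> hF; apply/setP => A; rewrite in_set1; apply/CGLpowP/eqP.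
  move=> [B [h ->]]; apply: big_one => i.
  by apply/eqP; rewrite -CGL13.
move=> ->; exists [ffun => 1%:M]; split.
  by move=> i; rewrite ffunE CGL13.
by rewrite big_one // => i; rewrite ffunE.
Qed.

Lemma mxF0111 (F : finFieldType) : mxF F 2 c0111 = M0111 F.
Proof.
by apply/matrixP => i j; rewrite !mxE; case: i => [[|[|//]] hi]; case: j => [[|[|//]] hj].
Qed.

Lemma mxF1110 (F : finFieldType) : mxF F 2 c1110 = M1110 F.
Proof.
by apply/matrixP => i j; rewrite !mxE; case: i => [[|[|//]] hi]; case: j => [[|[|//]] hj].
Qed.

Lemma CGL22 {F : finFieldType} (hF : #|F| = 2%N) (B : 'M[F]_2) :
  B \in CGL F 2 -> exists2 c, c \in C22 & B = mxF F 2 c.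
Proof.
have hp := pchar_card (isT : prime 2) hF.
rewrite -{1}(mxF_codeX hp hF B) (cglc_mxF hp) (eqP (allP CGL22c _ (codeX_mem hp hF B))) => h.
by exists (codeX 2 B) => //; rewrite mxF_codeX.
Qed.

Lemma S_mxF (F : finFieldType) (x : 'M[F]_2) :
  x \in [set 1%:M; M0111 F; M1110 F] <-> exists2 c, c \in S22 & x = mxF F 2 c.
Proof.
rewrite !inE -mxF0111 -mxF1110 -(mxF_id F 2); split.
  by move=> /orP[/orP[/eqP->|/eqP->]|/eqP->]; eexists; try reflexivity; vm_compute.
move=> [c hc ->]; move: hc; rewrite !inE => /orP[/eqP->|/orP[/eqP->|/eqP->]];
  by rewrite eqxx ?orbT.
Qed.

Lemma case22 (F : finFieldType) l : #|F| = 2%N -> (2 <= l)%N ->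
  CGLpow F 2 l = [set 1%:M; M0111 F; M1110 F].
Proof.
move=> hF hl; have hp := pchar_card (isT : prime 2) hF.
set S := [set 1%:M; M0111 F; M1110 F].
have cl : forall x y, x \in S -> y \in S -> x *m y \in S.
  move=> x y /S_mxF [cx hx ->] /S_mxF [cy hy ->]; apply/S_mxF.
  exists (mulc 2 2 cx cy); last by rewrite (mxF_mul hp).
  exact: (allP (allP S22closed _ hx) _ hy).
have inS : forall M, M \in CGL F 2 -> M \in S.
  move=> M /(CGL22 hF) [c hc ->]; apply/S_mxF; exists c => //; exact: (allP C22inS).
have one : (1%:M : 'M[F]_2) \in S by rewrite !inE eqxx.
apply/setP => A; apply/CGLpowP/idP.
  move=> [B [h ->]]; apply: (big_ind (fun M => M \in S)) => // i _; exact: inS.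
move=> hA.
have -> : l = (l - 2).+2 by rewrite -addn2 subnK.
set k := (l - 2)%N.
set C := M0111 F.
have CC : C \in CGL F 2 by rewrite /C -mxF0111 (cglc_mxF hp).
have : \big[mulmx/1%:M]_(i < k) C \in S by apply: (big_ind (fun M => M \in S)) => // i _; exact: inS.
case/S_mxF => cP hP eP.
case/S_mxF: hA => ct ht ->.
have := allP (allP S22solve _ hP) _ ht; case/hasP => b1 hb1 /hasP [b2 hb2 /eqP e].
have hc : all (cglc 2 2) C22 by case/andP: Q22c.
exists (fac k (mxF F 2 b1) (mxF F 2 b2) C); split.
  by apply: fac_CGL => //; rewrite (cglc_mxF hp); exact: (allP hc).
by rewrite prod_fac eP -!(mxF_mul hp) e.
Qed.

Theorem proposition3p1 (F : finFieldType) (q d l : nat)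
  (hq : #|F| = q) (hd : (0 < d)%N) (hl : (0 < l)%N) :
  (l = 1%N -> CGLpow F d l = CGL F d) /\
  ((2 <= l)%N -> ~ ((d, q) = (1, 2)%N \/ (d, q) = (1, 3)%N \/ (d, q) = (2, 2)%N) ->
     CGLpow F d l = GLset F d) /\
  ((2 <= l)%N -> d = 1%N -> q = 2%N -> CGLpow F d l = set0) /\
  ((2 <= l)%N -> d = 1%N -> q = 3%N -> CGLpow F d l = [set 1%:M]) /\
  ((2 <= l)%N -> d = 2%N -> q = 2%N ->
     CGLpow F 2 l = [set 1%:M; M0111 F; M1110 F]).
Proof.
subst q; split; first by move=> ->; exact: pow1.
split; first by move=> hl2 hex; apply: pow_GL => //; apply: Qall.
split; first by move=> _ -> hF; exact: case12.
split; first by move=> _ -> hF; exact: case13.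
by move=> hl2 _ hF; exact: case22.
Qed.
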